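(* Let $n\ge3$, $\mathfrak{g}=o(2n)$ in split form, and let $r_{BD}$ be the Belavin–Drinfeld $r$-matrix associated to the admissible triple $\Gamma_1=\{\alpha_{n-1}\}$, $\Gamma_2=\{\alpha_n\}$, $\tau(\alpha_{n-1})=\alpha_n$ (with some admissible $r_0$). Then $C(r_{BD})$ consists exactly of the diagonal matrices $T=\mathrm{diag}(t_1,\dots,t_{n-1},\eta,\eta,t_{n-1}^{-1},\dots,t_1^{-1})$ with $t_1,\dots,t_{n-1}\in\overline{\mathbb{K}}^\times$ arbitrary and $\eta\in\{1,-1\}$.
   Context: $\mathbb{K}=\mathbb{C}((\hbar))$, $\overline{\mathbb{K}}$ its algebraic closure. $S$ is the $2n\times2n$ antidiagonal matrix of ones; $o(2n)=\{A:A^TS+SA=0\}$, $O(2n)=\{X:X^TSX=S\}$ acting by conjugation. The Cartan subalgebra consists of $\mathrm{diag}(a_1,\dots,a_n,-a_n,\dots,-a_1)$; $\epsilon_i$ is the functional giving $a_i$; simple roots $\alpha_i=\epsilon_i-\epsilon_{i+1}$ ($i<n$), $\alpha_n=\epsilon_{n-1}+\epsilon_n$; positive roots correspond to the upper triangular part. $e_{\pm\alpha}$ are root vectors normalized by the invariant form, $\Omega$ the Casimir element, $\Omega_0$ its Cartan part. The $r$-matrix is $r_{BD}=r_0+\sum_{\alpha>0}e_\alpha\otimes e_{-\alpha}+e_{\alpha_{n-1}}\wedge e_{-\alpha_n}$ with $r_0\in\mathfrak{h}(\overline{\mathbb{K}})^{\otimes2}$, $r_0+r_0^{21}=\Omega_0$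 and $(\alpha_n\otimes1+1\otimes\alpha_{n-1})(r_0)=0$; $a\wedge b=a\otimes b-b\otimes a$. $C(r)=\{X\in O(2n,\overline{\mathbb{K}}):(\mathrm{Ad}_X\otimes\mathrm{Ad}_X)(r)=r\}$. *)

(* Defs.v *)
From HB Require Import structures.
From mathcomp Require Import all_boot all_order all_algebra.
Set Implicit Arguments. Unset Strict Implicit. Unset Printing Implicit Defensive.
Import Order.TTheory GRing.Theory.
Local Open Scope ring_scope.

(* Base field: an algebraically closed field of characteristic 0, playing the
   role of \overline{K}, K = C((hbar)).  Indices are 0-based: the matrix size is
   N = 2n, indices 0..2n-1, and the "mirror" of an index k is k' = 2n-1-k. *)

Section SoDefs.
Variable F : fieldType.
Variable n : nat.
Local Notation N := (2 * n)%N.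

Definition mir (k : nat) : nat := (N.-1 - k)%N.

Definition Smx : 'M[F]_N := \matrix_(i, j) (((i : nat) + j)%N == N.-1)%:R.

Definition in_O (X : 'M[F]_N) : Prop := X^T *m Smx *m X = Smx.
Definition in_o (A : 'M[F]_N) : Prop := A^T *m Smx + Smx *m A = 0.

Definition E (a b : nat) : 'M[F]_N :=
  \matrix_(i, j) (((i : nat) == a) && ((j : nat) == b))%:R.

(* Cartan element H_i = diag(0,..,1,..,0,..,-1,..,0) (i-th and mirror entries);
   a general Cartan element diag(a_1..a_n,-a_n..-a_1) is \sum_i a_i H_i.
   The epsilon_j are the dual coordinates: epsilon_j(H_i) = [i == j]. *)
Definition H (i : nat) : 'M[F]_N := E i i - E (mir i) (mir i).

(* Root vectors for positive roots, i<j (0-based):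
     e_{eps_i - eps_j} = E_{i,j} - E_{j',i'},
     e_{eps_i + eps_j} = E_{i,j'} - E_{j,i'},
   and e_{-alpha} = (e_alpha)^T.  They satisfy (e_alpha, e_{-alpha}) = 1 for
   the invariant form (A,B) = tr(AB)/2, for which the H_i are orthonormal. *)
Definition eminus (i j : nat) : 'M[F]_N :=
  E i j - E (mir j) (mir i).
Definition eplus (i j : nat) : 'M[F]_N :=
  E i (mir j) - E j (mir i).

(* Tensors in gl(2n) (x) gl(2n): coefficient of E_{ab} (x) E_{cd} at ((a,b),c),d *)
Definition tensor := {ffun 'I_N * 'I_N * 'I_N * 'I_N -> F}.

Definition tens (A B : 'M[F]_N) : tensor :=
  [ffun p : 'I_N * 'I_N * 'I_N * 'I_N => A p.1.1.1 p.1.1.2 * B p.1.2 p.2].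

Definition wedge (A B : 'M[F]_N) : tensor := tens A B - tens B A.

(* (Ad_X (x) Ad_X)(T), Ad_X(A) = X A X^{-1}, written in coordinates *)
Definition AdAd (X : 'M[F]_N) (T : tensor) : tensor :=
  let Xi := invmx X in
  [ffun p : 'I_N * 'I_N * 'I_N * 'I_N =>
     \sum_(a < N) \sum_(b < N) \sum_(c < N) \sum_(d < N)
       X p.1.1.1 a * Xi b p.1.1.2 * X p.1.2 c * Xi d p.2 * T (a, b, c, d)].

Definition r0_of (c : 'M[F]_n) : tensor :=
  \sum_(i < n) \sum_(j < n) tens (c i j *: H i) (H j).

(* Omega_0 = \sum_i H_i (x) H_i (H_i orthonormal for the invariant form) *)
Definition Omega0 : tensor := \sum_(i < n) tens (H i) (H i).

Definition flip (T : tensor) : tensor :=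
  [ffun p : 'I_N * 'I_N * 'I_N * 'I_N => T (p.1.2, p.2, p.1.1.1, p.1.1.2)].

(* Roots as linear functionals on h, given by their coefficients on the
   epsilon_i: alpha(H_i) = alpha_coef i. *)
Definition contr_left (f : 'I_n -> F) (c : 'M[F]_n) : 'M[F]_N :=
  \sum_(i < n) \sum_(j < n) (c i j * f i) *: H j.
Definition contr_right (g : 'I_n -> F) (c : 'M[F]_n) : 'M[F]_N :=
  \sum_(i < n) \sum_(j < n) (c i j * g j) *: H i.

(* simple roots alpha_{n-1} = eps_{n-1} - eps_n, alpha_n = eps_{n-1} + eps_n
   (1-based in the paper; indices n-2, n-1 here, 0-based) *)
Definition alpha_nm1 (i : 'I_n) : F :=
  ((i : nat) == n.-2)%:R - ((i : nat) == n.-1)%:R.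
Definition alpha_n (i : 'I_n) : F :=
  ((i : nat) == n.-2)%:R + ((i : nat) == n.-1)%:R.

Definition admissible_r0 (c : 'M[F]_n) : Prop :=
  r0_of c + flip (r0_of c) = Omega0 /\
  contr_left alpha_n c + contr_right alpha_nm1 c = 0.

Definition e_alpha_nm1 : 'M[F]_N := eminus n.-2 n.-1.
Definition e_malpha_n : 'M[F]_N := (eplus n.-2 n.-1)^T.

Definition r_BD (c : 'M[F]_n) : tensor :=
  r0_of c
  + \sum_(i < n) \sum_(j < n | (i < j)%N)
       (tens (eminus i j) (eminus i j)^T + tens (eplus i j) (eplus i j)^T)
  + wedge e_alpha_nm1 e_malpha_n.

Definition in_C (r : tensor) (X : 'M[F]_N) : Prop := in_O X /\ AdAd X r = r.

Definition Tdiag (t : nat -> F) (eta : F) : 'M[F]_N :=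
  diag_mx (\row_(k < N)
    if (k < n.-1)%N then t k
    else if (k <= n)%N then eta
    else (t (N.-1 - k)%N)^-1).

End SoDefs.

(* Main.v *)
Require Import Defs.
From HB Require Import structures.
From mathcomp Require Import all_boot all_order all_algebra.
From mathcomp Require Import ring zify.
Set Implicit Arguments. Unset Strict Implicit. Unset Printing Implicit Defensive.
Import Order.TTheory GRing.Theory.
Local Open Scope ring_scope.

Section Work.
Variable F : fieldType.
Variable n : nat.
Local Notation N := (2 * n)%N.

Lemma sum_rot3 (I J K : finType) (G : I -> J -> K -> F) :
  \sum_i \sum_j \sum_k G i j k = \sum_k \sum_i \sum_j G i j k.
Proof. under eq_bigr do rewrite exchange_big. by rewrite exchange_big. Qed.

Definition Phi (M : 'M[F]_N) (T : tensor F n) : 'M[F]_N :=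
  \matrix_(p, q) \sum_(b < N) \sum_(c < N) T (p, b, c, q) * M b c.

Lemma Phi_AdAd X M T :
  Phi M (AdAd X T) = X *m Phi (invmx X *m M *m X) T *m invmx X.
Proof.
apply/matrixP => p q; rewrite !mxE /AdAd.
set Xi := invmx X.
transitivity (\sum_(a < N) \sum_(b' < N) \sum_(c' < N) \sum_(d < N) \sum_(b < N) \sum_(c < N)
   X p a * Xi b' b * X c c' * Xi d q * T (a, b', c', d) * M b c).
  under eq_bigr => b _ do under eq_bigr => c _ do rewrite ffunE /=.
  under eq_bigr => b _ do under eq_bigr => c _ do
    (rewrite mulr_suml; under eq_bigr => a _ do
      (rewrite mulr_suml; under eq_bigr => b' _ do
        (rewrite mulr_suml; under eq_bigr => c' _ do rewrite mulr_suml))).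
  rewrite sum_rot3; apply: eq_bigr => a _.
  rewrite sum_rot3; apply: eq_bigr => b' _.
  rewrite sum_rot3; apply: eq_bigr => c' _.
  rewrite sum_rot3; apply: eq_bigr => d _.
  done.
symmetry.
under eq_bigr => d _ do rewrite !mxE mulr_suml.
rewrite exchange_big /=; apply: eq_bigr => a _.
under eq_bigr => d _ do (rewrite mxE mulr_sumr mulr_suml; under eq_bigr => b' _ do
   (rewrite mulr_sumr mulr_suml; under eq_bigr => c' _ do
      (rewrite !mxE mulr_sumr mulr_sumr mulr_suml; under eq_bigr => c _ do
        (rewrite !mxE mulr_suml mulr_sumr mulr_sumr mulr_suml)))).
rewrite -sum_rot3; apply: eq_bigr => b' _; apply: eq_bigr => c' _; apply: eq_bigr => d _.
rewrite exchange_big /=; apply: eq_bigr => b _; apply: eq_bigr => c _.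
ring.
Qed.

Local Notation E := (E F n).
Local Notation mir := (mir n).

Lemma Eij a b p q : E a b p q = (((p : nat) == a) && ((q : nat) == b))%:R.
Proof. by rewrite mxE. Qed.

Lemma trE a b : (E a b)^T = E b a.
Proof. by apply/matrixP => p q; rewrite !mxE andbC. Qed.

Lemma EE a b c d : E a b *m E c d = ((b == c) && (b < N)%N)%:R *: E a d.
Proof.
apply/matrixP => p q; rewrite !mxE.
have [hb|hb] := ltnP b N.
  rewrite (bigD1 (Ordinal hb)) //= big1 => [|k hk]; last first.
    rewrite !mxE; have -> : ((k : nat) == b) = false.
      by apply/negbTE; apply: contra hk => /eqP h; apply/eqP/val_inj.
    by rewrite andbF mul0r.
  rewrite !mxE eqxx andbT andbT addr0.
  by case: (p == a :> nat); case: (b == c); case: (q == d :> nat); rewrite /= ?mul1r ?mulr1 ?mul0r ?mulr0.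
rewrite andbF mul0r big1 // => k _; rewrite !mxE.
have -> : ((k : nat) == b) = false by apply/negbTE; apply/eqP => h; move: (ltn_ord k); lia.
by rewrite andbF mul0r.
Qed.

Lemma flip_AdAd (X : 'M[F]_N) (T : tensor F n) : AdAd X (flip T) = flip (AdAd X T).
Proof.
apply/ffunP => [[[[p q] u] v]]; rewrite !ffunE /=.
under eq_bigr => a _ do under eq_bigr => b _ do under eq_bigr => c _ do
  under eq_bigr => d _ do rewrite ffunE /=.
rewrite sum_rot3; apply: eq_bigr => c _.
rewrite sum_rot3; apply: eq_bigr => d _; apply: eq_bigr => a _; apply: eq_bigr => b _.
ring.
Qed.

Lemma PhiD M T1 T2 : Phi M (T1 + T2) = Phi M T1 + Phi M T2.
Proof.
apply/matrixP => p q; rewrite !mxE -big_split /=; apply: eq_bigr => b _.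
rewrite -big_split /=; apply: eq_bigr => c _; by rewrite ffunE mulrDl.
Qed.
Lemma PhiN M T : Phi M (- T) = - Phi M T.
Proof.
apply/matrixP => p q; rewrite !mxE -sumrN; apply: eq_bigr => b _.
rewrite -sumrN; apply: eq_bigr => c _; by rewrite ffunE mulNr.
Qed.
Lemma PhiB M T1 T2 : Phi M (T1 - T2) = Phi M T1 - Phi M T2.
Proof. by rewrite PhiD PhiN. Qed.
Lemma Phi0 M : Phi M 0 = 0.
Proof. by apply/matrixP => p q; rewrite !mxE big1 // => b _; rewrite big1 // => c _; rewrite ffunE mul0r. Qed.
Lemma Phi_sum M I (r : seq I) (P : pred I) (G : I -> tensor F n) :
  Phi M (\sum_(i <- r | P i) G i) = \sum_(i <- r | P i) Phi M (G i).
Proof. exact: (big_morph (Phi M) (PhiD M) (Phi0 M)). Qed.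
Lemma Phi_tens M A B : Phi M (tens A B) = A *m M *m B.
Proof.
apply/matrixP => p q; rewrite !mxE exchange_big /=; apply: eq_bigr => c _.
rewrite !mxE mulr_suml; apply: eq_bigr => b _; rewrite ffunE /=; ring.
Qed.

Lemma flipD (T1 T2 : tensor F n) : flip (T1 + T2) = flip T1 + flip T2.
Proof. by apply/ffunP => x; rewrite !ffunE. Qed.
Lemma flipN (T : tensor F n) : flip (- T) = - flip T.
Proof. by apply/ffunP => x; rewrite !ffunE. Qed.
Lemma flipB (T1 T2 : tensor F n) : flip (T1 - T2) = flip T1 - flip T2.
Proof. by rewrite flipD flipN. Qed.
Lemma flip0 : flip (0 : tensor F n) = 0.
Proof. by apply/ffunP => x; rewrite !ffunE. Qed.
Lemma flip_sum I (r : seq I) (P : pred I) (G : I -> tensor F n) :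
  flip (\sum_(i <- r | P i) G i) = \sum_(i <- r | P i) flip (G i).
Proof. exact: (big_morph (@flip F n) flipD flip0). Qed.
Lemma flip_tens (A B : 'M[F]_N) : flip (tens A B) = tens B A.
Proof. by apply/ffunP => x; rewrite !ffunE /= mulrC. Qed.

Lemma trB (A B : 'M[F]_N) : (A - B)^T = A^T - B^T.
Proof. by apply/matrixP => p q; rewrite !mxE. Qed.

Lemma S2 : Smx F n *m Smx F n = 1%:M.
Proof.
apply/matrixP => p q; rewrite !mxE.
have hN : (N.-1 - p < N)%N by have := ltn_ord p; lia.
rewrite (bigD1 (Ordinal hN)) //= big1 => [|k hk]; last first.
  rewrite !mxE; have -> : ((p + k)%N == N.-1) = false; last by rewrite mul0r.
  apply/negbTE; apply: contra hk => /eqP h; apply/eqP/val_inj => /=; lia.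
rewrite !mxE addr0.
have -> : ((p + (N.-1 - p))%N == N.-1) = true by apply/eqP; have := ltn_ord p; lia.
case: (eqVneq p q) => [<-|hpq].
  have -> : ((N.-1 - p + p)%N == N.-1) = true by apply/eqP; have := ltn_ord p; lia.
  by rewrite mulr1.
have -> : ((N.-1 - p + q)%N == N.-1) = false; last by rewrite mulr0.
apply/negbTE; apply: contra hpq => /eqP h; apply/eqP/val_inj.
rewrite /=; have := ltn_ord p; have := ltn_ord q; lia.
Qed.

Lemma O_unit (X : 'M[F]_N) : in_O X -> X \in unitmx.
Proof.
move=> hX; have h : (Smx F n *m X^T *m Smx F n) *m X = 1%:M by rewrite -!mulmxA (mulmxA X^T) hX S2.
by case: (mulmx1_unit h).
Qed.

Lemma diag_comm (A B : 'M[F]_N) :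
  (forall p q, p != q -> A p q = 0) -> (forall p q, p != q -> B p q = 0) ->
  A *m B = B *m A.
Proof.
move=> hA hB; apply/matrixP => p q; rewrite !mxE.
rewrite (bigD1 p) //= big1 => [|k hk]; last by rewrite hA ?mul0r // eq_sym.
rewrite [RHS](bigD1 q) //= [X in _ = _ + X]big1 => [|k hk]; last by rewrite hA ?mulr0.
case: (eqVneq p q) => [->|hpq]; first by rewrite mulrC.
by rewrite hB // mulr0 mul0r.
Qed.

Lemma Hdiag i p q : p != q -> H F n i p q = 0.
Proof.
move=> hpq; rewrite !mxE.
have e : forall k, ((p : nat) == k) && ((q : nat) == k) = false.
  move=> k; apply/negbTE; apply: contra hpq => /andP[/eqP a /eqP b].
  by apply/eqP/val_inj; rewrite /= a b.
by rewrite !e subrr.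
Qed.

Lemma comm_part i j : (i < j)%N -> (j < n)%N ->
  eminus F n i j *m (eminus F n i j)^T - (eminus F n i j)^T *m eminus F n i j
  + (eplus F n i j *m (eplus F n i j)^T - (eplus F n i j)^T *m eplus F n i j)
  = 2%:R *: H F n i.
Proof.
move=> hij hjn.
have h1 : (j < mir j)%N by rewrite /mir; lia.
have h2 : (mir j < mir i)%N by rewrite /mir; lia.
have h3 : (i < mir j)%N by rewrite /mir; lia.
have h4 : (i < mir i)%N by rewrite /mir; lia.
have h5 : (j < mir i)%N by rewrite /mir; lia.
have hiN : (i < N)%N by lia.
have hjN : (j < N)%N by lia.
have hiN' : (mir i < N)%N by rewrite /mir; lia.
have hjN' : (mir j < N)%N by rewrite /mir; lia.
rewrite /eminus /eplus /H !trB !trE !mulmxBl !mulmxBr !EE !eqxx.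
rewrite ?(ltn_eqF hij) ?(gtn_eqF hij) ?(ltn_eqF h1) ?(gtn_eqF h1) ?(ltn_eqF h2) ?(gtn_eqF h2).
rewrite ?(ltn_eqF h3) ?(gtn_eqF h3) ?(ltn_eqF h4) ?(gtn_eqF h4) ?(ltn_eqF h5) ?(gtn_eqF h5).
rewrite hiN hjN hiN' hjN' /= !scale1r !scale0r.
apply/matrixP => p q; rewrite !mxE; ring.
Qed.

Lemma wedge_part : (3 <= n)%N ->
  e_alpha_nm1 F n *m e_malpha_n F n - e_malpha_n F n *m e_alpha_nm1 F n = 0.
Proof.
move=> hn.
have h1 : (n.-2 < n.-1)%N by lia.
have h2 : (n.-1 < mir n.-1)%N by rewrite /mir; lia.
have h3 : (mir n.-1 < mir n.-2)%N by rewrite /mir; lia.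
have h4 : (n.-2 < mir n.-1)%N by rewrite /mir; lia.
have h5 : (n.-2 < mir n.-2)%N by rewrite /mir; lia.
have h6 : (n.-1 < mir n.-2)%N by rewrite /mir; lia.
have hiN : (n.-2 < N)%N by lia.
have hjN : (n.-1 < N)%N by lia.
have hiN' : (mir n.-2 < N)%N by rewrite /mir; lia.
have hjN' : (mir n.-1 < N)%N by rewrite /mir; lia.
rewrite /e_alpha_nm1 /e_malpha_n /eminus /eplus !trB !trE !mulmxBl !mulmxBr !EE ?eqxx.
rewrite ?(ltn_eqF h1) ?(gtn_eqF h1) ?(ltn_eqF h2) ?(gtn_eqF h2) ?(ltn_eqF h3) ?(gtn_eqF h3).
rewrite ?(ltn_eqF h4) ?(gtn_eqF h4) ?(ltn_eqF h5) ?(gtn_eqF h5) ?(ltn_eqF h6) ?(gtn_eqF h6).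
rewrite ?hiN ?hjN ?hiN' ?hjN' /= ?scale1r ?scale0r.
apply/matrixP => p q; rewrite !mxE; ring.
Qed.

Lemma Phi_sum2 M (P : 'I_n -> 'I_n -> bool) (a b : 'I_n -> 'I_n -> 'M[F]_N) :
  Phi M (\sum_(i < n) \sum_(j < n | P i j) tens (a i j) (b i j)) =
  \sum_(i < n) \sum_(j < n | P i j) a i j *m M *m b i j.
Proof.
rewrite Phi_sum; apply: eq_bigr => i _; rewrite Phi_sum; apply: eq_bigr => j _.
exact: Phi_tens.
Qed.
Lemma Phi_sum2' M (P : 'I_n -> 'I_n -> bool) (a b a' b' : 'I_n -> 'I_n -> 'M[F]_N) :
  Phi M (\sum_(i < n) \sum_(j < n | P i j) (tens (a i j) (b i j) + tens (a' i j) (b' i j))) =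
  \sum_(i < n) \sum_(j < n | P i j) (a i j *m M *m b i j + a' i j *m M *m b' i j).
Proof.
rewrite Phi_sum; apply: eq_bigr => i _; rewrite Phi_sum; apply: eq_bigr => j _.
by rewrite PhiD !Phi_tens.
Qed.
Lemma Phi_fsum2 M (P : 'I_n -> 'I_n -> bool) (a b : 'I_n -> 'I_n -> 'M[F]_N) :
  Phi M (\sum_(i < n) flip (\sum_(j < n | P i j) tens (a i j) (b i j))) =
  \sum_(i < n) \sum_(j < n | P i j) b i j *m M *m a i j.
Proof.
rewrite Phi_sum; apply: eq_bigr => i _; rewrite flip_sum Phi_sum; apply: eq_bigr => j _.
by rewrite flip_tens Phi_tens.
Qed.
Lemma Phi_fsum2' M (P : 'I_n -> 'I_n -> bool) (a b a' b' : 'I_n -> 'I_n -> 'M[F]_N) :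
  Phi M (\sum_(i < n) flip (\sum_(j < n | P i j) (tens (a i j) (b i j) + tens (a' i j) (b' i j)))) =
  \sum_(i < n) \sum_(j < n | P i j) (b i j *m M *m a i j + b' i j *m M *m a' i j).
Proof.
rewrite Phi_sum; apply: eq_bigr => i _; rewrite flip_sum Phi_sum; apply: eq_bigr => j _.
by rewrite flipD !flip_tens PhiD !Phi_tens.
Qed.

Lemma Dm_eq (c : 'M[F]_n) : (3 <= n)%N ->
  Phi 1%:M (r_BD c) - Phi 1%:M (flip (r_BD c)) =
  \sum_(i < n) \sum_(j < n | (i < j)%N) 2%:R *: H F n i.
Proof.
move=> hn.
rewrite /r_BD /r0_of /wedge !flipD ?flipN !flip_sum.
rewrite !PhiD ?PhiN Phi_sum2 Phi_sum2' Phi_fsum2 Phi_fsum2' !Phi_tens ?flip_tens ?Phi_tens.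
rewrite !mulmx1 (wedge_part hn) -[X in _ - (_ + _ + X)]opprB (wedge_part hn) oppr0 !addr0.
have -> : \sum_(i < n) \sum_(j < n) H F n j *m 1%:M *m (c i j *: H F n i) =
          \sum_(i < n) \sum_(j < n) c i j *: H F n i *m 1%:M *m H F n j.
  apply: eq_bigr => i _; apply: eq_bigr => j _; rewrite !mulmx1; apply: diag_comm => p q hpq.
    exact: Hdiag.
  by rewrite mxE (Hdiag _ hpq) mulr0.
rewrite opprD addrACA subrr add0r -sumrB; apply: eq_bigr => i _.
rewrite -sumrB; apply: eq_bigr => j hij.
by rewrite !mulmx1 opprD addrACA comm_part.
Qed.

Lemma sum_cnt (x : F) m i : \sum_(j < m | (i < j)%N) x = (m - i.+1)%:R * x.
Proof.
elim: m => [|m IH]; first by rewrite big_ord0 sub0n mul0r.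
rewrite big_mkcond big_ord_recr /= -big_mkcond IH.
case: (ltnP i m) => him.
  have -> : (m.+1 - i.+1 = (m - i.+1) + 1)%N by lia.
  by rewrite natrD mulrDl mul1r.
have -> : (m.+1 - i.+1 = 0)%N by lia.
have -> : (m - i.+1 = 0)%N by lia.
by rewrite mul0r addr0.
Qed.

Lemma sum_delta m (f : nat -> F) k :
  \sum_(i < m) ((k == i :> nat))%:R * f i = (k < m)%:R * f k.
Proof.
case: (ltnP k m) => hk.
  rewrite (bigD1 (Ordinal hk)) //= big1 => [|i hi]; first by rewrite eqxx mul1r addr0.
  have -> : (k == i :> nat) = false; last by rewrite mul0r.
  by apply/negbTE; apply: contra hi => /eqP h; apply/eqP/val_inj.
rewrite big1 ?mul0r // => i _.
have -> : (k == i :> nat) = false; last by rewrite mul0r.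
by apply/negbTE/eqP => h; have := ltn_ord i; lia.
Qed.

Lemma Dm_entry (c : 'M[F]_n) p q : (3 <= n)%N ->
  (Phi 1%:M (r_BD c) - Phi 1%:M (flip (r_BD c))) p q =
  (p == q)%:R * (2%:R * ((n - (p : nat).+1)%:R - (n - (mir p).+1)%:R)).
Proof.
move=> hn; rewrite (Dm_eq c hn) summxE.
under eq_bigr => i _ do (rewrite summxE; under eq_bigr => j _ do rewrite mxE).
under eq_bigr => i _ do rewrite sum_cnt.
case: (eqVneq p q) => [<-|hpq]; last first.
  by rewrite mul0r big1 // => i _; rewrite (Hdiag _ hpq) mulr0 mulr0.
rewrite mul1r.
under eq_bigr => i _ do rewrite !mxE !andbb mulrBr mulrBr.
rewrite sumrB.
have e : forall i : 'I_n, ((p : nat) == mir i) = (mir p == i).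
  move=> i; apply/eqP/eqP; have := ltn_ord i; have := ltn_ord p; rewrite /mir; lia.
under [X in _ - X]eq_bigr => i _ do rewrite (e i).
have f1 := sum_delta n (fun i => 2%:R * (n - i.+1)%:R) p.
have f2 := sum_delta n (fun i => 2%:R * (n - i.+1)%:R) (mir p).
have -> : \sum_(i < n) (n - i.+1)%:R * (2 * ((p : nat) == i)%:R) =
  \sum_(i < n) ((p : nat) == i)%:R * (2%:R * (n - i.+1)%:R :> F).
  by apply: eq_bigr => i _; ring.
have -> : \sum_(i < n) (n - i.+1)%:R * (2 * (mir p == i)%:R) =
  \sum_(i < n) (mir p == i)%:R * (2%:R * (n - i.+1)%:R :> F).
  by apply: eq_bigr => i _; ring.
rewrite f1 f2.
case: (ltnP p n) => h1; case: (ltnP (mir p) n) => h2 /=.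
- by rewrite /mir in h2; lia.
- have -> : (n - (mir p).+1 = 0)%N by lia.
  by rewrite !mul1r mul0r; ring.
- have -> : (n - p.+1 = 0)%N by lia.
  by rewrite !mul1r mul0r; ring.
- by have := ltn_ord p; rewrite /mir in h2; lia.
Qed.

Lemma natr_inj (h0 : [pchar F] =i pred0) a b : (a%:R : F) = b%:R -> a = b.
Proof.
have hc := (pcharf0P F).1 h0.
wlog hab : a b / (a <= b)%N => [W|].
  by case: (leqP a b) => h e; [exact: W | apply/esym/W => //; exact: ltnW].
move=> e; have : ((b - a)%:R : F) = 0 by rewrite natrB // e subrr.
by move/eqP; rewrite hc => /eqP; lia.
Qed.

Definition blk (k : nat) : bool := (k == n.-1) || (k == n).
Definition dval (p : nat) : F := 2%:R * ((n - p.+1)%:R - (n - (mir p).+1)%:R).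

Lemma dval_inj (h0 : [pchar F] =i pred0) (p q : 'I_N) : p != q -> ~~ (blk p && blk q) ->
  dval p != dval q.
Proof.
move=> hpq hb; apply/eqP => e.
have h2 : (2%:R : F) != 0 by rewrite ((pcharf0P F).1 h0).
move: e; rewrite /dval => /(mulfI h2) e.
have : ((n - p.+1) + (n - (mir q).+1) = (n - q.+1) + (n - (mir p).+1))%N.
  apply: (natr_inj h0); rewrite !natrD.
  move: e; set a1 := (_ - p.+1)%:R; set a2 := (_ - (mir p).+1)%:R.
  set a3 := (_ - q.+1)%:R; set a4 := (_ - (mir q).+1)%:R => e.
  apply/eqP; rewrite -subr_eq0; apply/eqP.
  have -> : a1 + a4 - (a3 + a2) = (a1 - a2) - (a3 - a4) by ring.
  by rewrite e subrr.
move: hpq hb; rewrite /blk -val_eqE /=; have := ltn_ord p; have := ltn_ord q; rewrite /mir.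
case: eqP => ?; case: eqP => ?; case: eqP => ?; case: eqP => ?; case: eqP => ? //=; lia.
Qed.

Lemma sum_eq1 (f : 'I_N -> F) p : \sum_k (p == k)%:R * f k = f p.
Proof.
rewrite (bigD1 p) //= eqxx mul1r big1 ?addr0 // => k hk.
by rewrite eq_sym (negbTE hk) mul0r.
Qed.

Lemma X_zero (h0 : [pchar F] =i pred0) (c : 'M[F]_n) (X : 'M[F]_N) : (3 <= n)%N ->
  in_O X -> AdAd X (r_BD c) = r_BD c ->
  forall p q : 'I_N, p != q -> ~~ (blk p && blk q) -> X p q = 0.
Proof.
move=> hn hO hr p q hpq hb.
have hu := O_unit hO.
have e1 : Phi 1%:M (r_BD c) = X *m Phi 1%:M (r_BD c) *m invmx X.
  by rewrite -{1}hr Phi_AdAd mulmx1 (mulVmx hu).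
have e2 : Phi 1%:M (flip (r_BD c)) = X *m Phi 1%:M (flip (r_BD c)) *m invmx X.
  by rewrite -{1}hr -flip_AdAd Phi_AdAd mulmx1 (mulVmx hu).
set Dm := Phi 1%:M (r_BD c) - Phi 1%:M (flip (r_BD c)).
have eD : Dm = X *m Dm *m invmx X by rewrite /Dm mulmxBr mulmxBl -e1 -e2.
have eC : Dm *m X = X *m Dm by rewrite {1}eD -mulmxA (mulVmx hu) mulmx1.
have := congr1 (fun M : 'M[F]_N => M p q) eC; rewrite /= !mxE.
under eq_bigr => k _ do rewrite /Dm (Dm_entry c p k hn) -mulrA.
rewrite sum_eq1.
under eq_bigr => k _ do rewrite /Dm (Dm_entry c k q hn) eq_sym mulrCA.
rewrite sum_eq1 => e.
have := dval_inj h0 hpq hb; rewrite /dval => hd.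
have : X p q * (2%:R * ((n - q.+1)%:R - (n - (mir q).+1)%:R) - 2%:R * ((n - p.+1)%:R - (n - (mir p).+1)%:R)) = 0.
  by rewrite mulrBr -e mulrC subrr.
rewrite eq_sym in hd; move/eqP; rewrite mulf_eq0 subr_eq0 (negbTE hd) orbF.
by move/eqP.
Qed.

Lemma AEB (A B : 'M[F]_N) k (hk : (k < N)%N) p q :
  (A *m E k k *m B) p q = A p (Ordinal hk) * B (Ordinal hk) q.
Proof.
rewrite !mxE (bigD1 (Ordinal hk)) //= big1 => [|j hj]; last first.
  rewrite !mxE big1 ?mul0r // => i _; rewrite !mxE.
  have -> : ((j : nat) == k) = false; last by rewrite andbF mulr0.
  by apply/negbTE; apply: contra hj => /eqP h; apply/eqP/val_inj.
rewrite addr0 !mxE (bigD1 (Ordinal hk)) //= big1 => [|i hi]; last first.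
  rewrite !mxE; have -> : ((i : nat) == k) = false; last by rewrite mulr0.
  by apply/negbTE; apply: contra hi => /eqP h; apply/eqP/val_inj.
by rewrite !mxE eqxx /= mulr1 addr0.
Qed.

Lemma G_block (c : 'M[F]_n) (p q : 'I_N) (hn : (3 <= n)%N) : blk p -> blk q ->
  Phi (E n.-2 n.-2) (r_BD c) p q = - (((p : nat) == n) && ((q : nat) == n.-1))%:R.
Proof.
move=> hp hq.
have hk : (n.-2 < N)%N by lia.
rewrite /r_BD /r0_of /wedge !PhiD ?PhiN Phi_sum2 Phi_sum2' !Phi_tens.
have -> : forall M1 M2 M3 M4 : 'M[F]_N, (M1 + M2 + (M3 - M4)) p q = M1 p q + M2 p q + (M3 p q - M4 p q).
  by move=> *; rewrite !mxE.
move: hp hq; rewrite /blk => hp hq.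
have hpb : (n.-1 <= p)%N /\ (p <= n)%N by case/orP: hp => /eqP ->; lia.
have hqb : (n.-1 <= q)%N /\ (q <= n)%N by case/orP: hq => /eqP ->; lia.
have z1 : (\sum_(i < n) \sum_(j < n) c i j *: H F n i *m E n.-2 n.-2 *m H F n j) p q = 0.
  rewrite summxE big1 // => i _; rewrite summxE big1 // => j _.
  rewrite (AEB _ _ hk) mxE (@Hdiag i p (Ordinal hk)) ?mulr0 ?mul0r //.
  by rewrite -val_eqE /=; apply/eqP; lia.
have z2 : (\sum_(i < n) \sum_(j < n | (i < j)%N)
         (eminus F n i j *m E n.-2 n.-2 *m (eminus F n i j)^T +
          eplus F n i j *m E n.-2 n.-2 *m (eplus F n i j)^T)) p q = 0.
  rewrite summxE big1 // => i _; rewrite summxE big1 // => j hij.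
  rewrite mxE !(AEB _ _ hk) /eminus /eplus !mxE /=.
  have := ltn_ord i; have := ltn_ord j; rewrite /mir => hi hj.
  have -> : ((p : nat) == i) && (n.-2 == (j : nat)) = false by apply/negbTE/andP => [[/eqP ? /eqP ?]]; lia.
  have -> : ((p : nat) == ((2 * n).-1 - j)%N) && (n.-2 == ((2 * n).-1 - i)%N) = false by apply/negbTE/andP => [[/eqP ? /eqP ?]]; lia.
  have -> : ((p : nat) == i) && (n.-2 == ((2 * n).-1 - j)%N) = false by apply/negbTE/andP => [[/eqP ? /eqP ?]]; lia.
  have -> : ((p : nat) == j) && (n.-2 == ((2 * n).-1 - i)%N) = false by apply/negbTE/andP => [[/eqP ? /eqP ?]]; lia.
  by rewrite subrr !mul0r add0r.
rewrite z1 z2 !add0r !(AEB _ _ hk) /e_alpha_nm1 /e_malpha_n /eminus /eplus !mxE /= /mir.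
have -> : (n.-2 == n.-1) = false by apply/eqP; lia.
have -> : (n.-2 == (N.-1 - n.-1)%N) = false by apply/eqP; lia.
have -> : (n.-2 == (N.-1 - n.-2)%N) = false by apply/eqP; lia.
have -> : ((p : nat) == (N.-1 - n.-1)%N) = ((p : nat) == n) by apply/eqP/eqP; lia.
have -> : ((p : nat) == (N.-1 - n.-2)%N) = false by apply/eqP; lia.
have -> : ((q : nat) == (N.-1 - n.-2)%N) = false by apply/eqP; lia.
rewrite eqxx !andbF /= !subr0 mul0r sub0r.
by case: (p == n :> nat); case: (q == n.-1 :> nat); rewrite /= ?mul1r ?mul0r ?oppr0.
Qed.

Lemma sum_nb (g : 'I_N -> F) p : (forall k, k != p -> g k = 0) -> \sum_k g k = g p.
Proof. by move=> hg; rewrite (bigD1 p) //= big1 ?addr0. Qed.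

Lemma sum_b (g : 'I_N -> F) (b1 b2 : 'I_N) : b1 != b2 ->
  (forall k, k != b1 -> k != b2 -> g k = 0) -> \sum_k g k = g b1 + g b2.
Proof.
move=> h12 hg; rewrite (bigD1 b1) //= (bigD1 b2) /=; last by rewrite eq_sym.
rewrite big1 ?addr0 // => k /andP[hk1 hk2]; exact: hg.
Qed.

Lemma Smx_entry (p q : 'I_N) : Smx F n p q = (((p : nat) + q)%N == N.-1)%:R.
Proof. by rewrite mxE. Qed.

Lemma mulE (A B : 'M[F]_N) p q : (A *m B) p q = \sum_j A p j * B j q.
Proof. by rewrite mxE. Qed.
Lemma trEnt (A : 'M[F]_N) p q : A^T p q = A q p.
Proof. by rewrite mxE. Qed.

Lemma fwd (h0 : [pchar F] =i pred0) (c : 'M[F]_n) (X : 'M[F]_N) : (3 <= n)%N ->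
  in_O X -> AdAd X (r_BD c) = r_BD c ->
  exists (t : nat -> F) (eta : F),
    (forall k, (k < n.-1)%N -> t k != 0) /\ (eta = 1 \/ eta = -1) /\
    X = Tdiag n t eta.
Proof.
move=> hn hO hr.
have hz := X_zero h0 hn hO hr.
have hu := O_unit hO.
have hb1 : (n.-1 < N)%N by lia.
have hb2 : (n < N)%N by lia.
have hk0 : (n.-2 < N)%N by lia.
pose b1 := Ordinal hb1; pose b2 := Ordinal hb2; pose k0 := Ordinal hk0.
have b12 : b1 != b2 by rewrite -val_eqE /=; apply/eqP; lia.
have blk1 : blk b1 by rewrite /blk /= eqxx.
have blk2 : blk b2 by rewrite /blk /= eqxx orbT.
have nblk (k : 'I_N) : k != b1 -> k != b2 -> ~~ blk k.
  by rewrite /blk -!val_eqE /= => /negbTE -> /negbTE ->.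
have nblk0 : ~~ blk k0 by rewrite /blk /=; apply/norP; split; apply/eqP; lia.
have hEX : E n.-2 n.-2 *m X = X *m E n.-2 n.-2.
  apply/matrixP => p q; rewrite !mxE.
  rewrite (sum_nb _ (p := k0)) => [|k hk]; last first.
    rewrite mxE; have -> : ((k : nat) == n.-2) = false; last by rewrite andbF mul0r.
    by apply/negbTE; apply: contra hk => /eqP h; apply/eqP/val_inj.
  rewrite [RHS](sum_nb _ (p := k0)) => [|k hk]; last first.
    rewrite mxE; have -> : ((k : nat) == n.-2) = false; last by rewrite /= mulr0.
    by apply/negbTE; apply: contra hk => /eqP h; apply/eqP/val_inj.
  rewrite !mxE /= eqxx andbT.
  have ep : forall r : 'I_N, ((r : nat) == n.-2) = (r == k0) by move=> r; rewrite -val_eqE.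
  rewrite !ep.
  case: (eqVneq p k0) => [->|hp]; case: (eqVneq q k0) => [->|hq]; rewrite /= ?mul1r ?mulr1 ?mul0r ?mulr0 //.
  - by rewrite hz // ?(negbTE nblk0) // eq_sym.
  - by rewrite hz // ?(negbTE nblk0) ?andbF.
have eG : Phi (E n.-2 n.-2) (r_BD c) = X *m Phi (E n.-2 n.-2) (r_BD c) *m invmx X.
  have hXEX : invmx X *m E n.-2 n.-2 *m X = E n.-2 n.-2.
    by rewrite -mulmxA hEX mulmxA (mulVmx hu) mul1mx.
  by rewrite -{1}hr Phi_AdAd hXEX.
set G := Phi (E n.-2 n.-2) (r_BD c) in eG.
have eGX : G *m X = X *m G by rewrite {1}eG -mulmxA (mulVmx hu) mulmx1.
have Gb (p q : 'I_N) : blk p -> blk q -> G p q = - (((p : nat) == n) && ((q : nat) == n.-1))%:R.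
  by move=> hp hq; exact: G_block.
have hcol (q k : 'I_N) : blk q -> k != b1 -> k != b2 -> X k q = 0.
  move=> hq hk1 hk2; have hk := nblk k hk1 hk2; apply: hz; last by rewrite (negbTE hk).
  by apply: contraNneq hk => ->.
have hrow (p k : 'I_N) : blk p -> k != b1 -> k != b2 -> X p k = 0.
  move=> hp hk1 hk2; have hk := nblk k hk1 hk2; apply: hz; last by rewrite (negbTE hk) andbF.
  by apply: contraNneq hk => <-.
have G11 : G b1 b1 = 0 by rewrite Gb //= (_ : (n.-1 == n) = false) ?oppr0 //; apply/eqP; lia.
have G12 : G b1 b2 = 0 by rewrite Gb //= (_ : (n.-1 == n) = false) ?oppr0 //; apply/eqP; lia.
have G21 : G b2 b1 = -1 by rewrite Gb //= !eqxx.
have G22 : G b2 b2 = 0 by rewrite Gb //= eqxx (_ : (n == n.-1) = false) ?oppr0 //; apply/eqP; lia.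
have eE (p q : 'I_N) : (G *m X) p q = (X *m G) p q by rewrite eGX.
have hb : X b1 b2 = 0.
  have := eE b1 b1; rewrite !mxE (@sum_b _ b1 b2 b12) => [|k hk1 hk2]; last by rewrite hcol ?mulr0.
  rewrite (@sum_b _ b1 b2 b12) => [|k hk1 hk2]; last by rewrite hrow ?mul0r.
  by rewrite G11 G12 G21 !mul0r mulr0 !add0r mulrN1 => /eqP; rewrite eq_sym oppr_eq0 => /eqP.
have had : X b1 b1 = X b2 b2.
  have := eE b2 b1; rewrite !mxE (@sum_b _ b1 b2 b12) => [|k hk1 hk2]; last by rewrite hcol ?mulr0.
  rewrite (@sum_b _ b1 b2 b12) => [|k hk1 hk2]; last by rewrite hrow ?mul0r.
  rewrite G11 G21 G22 !mul0r !mulr0 addr0 add0r mulN1r mulrN1 => /eqP; rewrite eqr_opp => /eqP //.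
have hOe (p q : 'I_N) : \sum_j (\sum_i X i p * Smx F n i j) * X j q = Smx F n p q.
  have := congr1 (fun M : 'M[F]_N => M p q) hO; rewrite /= mulE => <-.
  apply: eq_bigr => j _; rewrite mulE; congr (_ * _).
  by apply: eq_bigr => i _; rewrite trEnt.
have S11 : Smx F n b1 b1 = 0 by rewrite Smx_entry /= (_ : (_ == _) = false) //; apply/eqP; lia.
have S22 : Smx F n b2 b2 = 0 by rewrite Smx_entry /= (_ : (_ == _) = false) //; apply/eqP; lia.
have S12 : Smx F n b1 b2 = 1 by rewrite Smx_entry /= (_ : (_ == _) = true) //; apply/eqP; lia.
have S21 : Smx F n b2 b1 = 1 by rewrite Smx_entry /= (_ : (_ == _) = true) //; apply/eqP; lia.
have blkO (p q : 'I_N) : blk q -> \sum_j (\sum_i X i p * Smx F n i j) * X j q =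
   (\sum_i X i p * Smx F n i b1) * X b1 q + (\sum_i X i p * Smx F n i b2) * X b2 q.
  by move=> hq; rewrite (@sum_b _ b1 b2 b12) // => k hk1 hk2; rewrite hcol ?mulr0.
have e11 := hOe b1 b1; rewrite blkO // !(@sum_b _ b1 b2 b12) in e11; last first.
  1,2: by move=> k hk1 hk2; rewrite hcol ?mul0r.
have e12 := hOe b1 b2; rewrite blkO // !(@sum_b _ b1 b2 b12) in e12; last first.
  1,2: by move=> k hk1 hk2; rewrite hcol ?mul0r.
rewrite S11 S22 S12 S21 hb -had in e11 e12.
have ha2 : X b1 b1 * X b1 b1 = 1 by rewrite -e12; ring.
have ha0 : X b1 b1 != 0 by apply/eqP => e; move: ha2; rewrite e mul0r => /eqP; rewrite eq_sym oner_eq0.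
have h2 : (2%:R : F) != 0 by rewrite ((pcharf0P F).1 h0).
have hc : X b2 b1 = 0.
  have : X b2 b1 * (2%:R * X b1 b1) = 0 by rewrite -e11; ring.
  by move/eqP; rewrite mulf_eq0 mulf_eq0 (negbTE h2) (negbTE ha0) /= orbF => /eqP.
have heta : X b1 b1 = 1 \/ X b1 b1 = -1.
  have : (X b1 b1 - 1) * (X b1 b1 + 1) = 0 by rewrite mulrDr mulrBl ha2; ring.
  move/eqP; rewrite mulf_eq0 subr_eq0 addr_eq0 => /orP[] /eqP; by [left | right].
have mblk (p : 'I_N) : blk (mir p) = blk p.
  rewrite /blk /mir; have := ltn_ord p.
  by case: eqP => ?; case: eqP => ?; case: eqP => ?; case: eqP => ? //=; lia.
have hdiag (p q : 'I_N) : ~~ blk p -> (q : nat) = mir p -> X p p * X q q = 1.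
  move=> hp hq.
  have hq' : ~~ blk q by rewrite hq mblk.
  have := hOe p q; rewrite (sum_nb _ (p := q)) => [|j hj]; last first.
    by rewrite (hz j q hj) ?mulr0 // (negbTE hq') andbF.
  rewrite (sum_nb _ (p := p)) => [|i hi]; last by rewrite (hz i p hi) ?mul0r // (negbTE hp) andbF.
  rewrite Smx_entry (_ : (_ == _) = true) ?mulr1 //; apply/eqP; rewrite hq /mir.
  have := ltn_ord p; lia.
pose t (k : nat) := X (insubd b1 k) (insubd b1 k).
have tP (p : 'I_N) : t p = X p p by rewrite /t valKd.
have mirP (p : 'I_N) : (mir p < N)%N by rewrite /mir; have := ltn_ord p; lia.
exists t, (X b1 b1); split; [|split => //].
  move=> k hk; have hkN : (k < N)%N by lia.
  have := tP (Ordinal hkN); rewrite /= => ->.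
  have hp : ~~ blk (Ordinal hkN) by rewrite /blk /=; apply/norP; split; apply/eqP; lia.
  have := hdiag _ (Ordinal (mirP (Ordinal hkN))) hp erefl.
  by move=> e; apply/eqP => e0; move: e; rewrite e0 mul0r => /eqP; rewrite eq_sym oner_eq0.
apply/matrixP => p q; rewrite /Tdiag !mxE.
case: (eqVneq p q) => [<-|hpq]; last first.
  rewrite mulr0n.
  case: (boolP (blk p && blk q)) => hb'; last exact: hz.
  case/andP: hb' => hp hq.
  have /orP[e1|e1] : (p == b1) || (p == b2) by move: hp; rewrite /blk -!val_eqE.
    have e2 : q == b2.
      move: hq hpq; rewrite /blk (eqP e1) -!val_eqE /=.
      by case: eqP => ?; case: eqP => ? //=; lia.
    by rewrite (eqP e1) (eqP e2).
  have e2 : q == b1.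
    move: hq hpq; rewrite /blk (eqP e1) -!val_eqE /=.
    by case: eqP => ?; case: eqP => ? //=; lia.
  by rewrite (eqP e1) (eqP e2).
rewrite mulr1n.
case: ifP => hi1.
  by rewrite -tP.
case: ifP => hi2.
  have /orP[e1|e1] : (p == b1) || (p == b2).
    by rewrite -!val_eqE /=; apply/orP; case: (eqVneq (p : nat) n.-1) => ?; [left | right]; apply/eqP; lia.
    by rewrite (eqP e1).
  by rewrite (eqP e1) had.
have hp : ~~ blk p by rewrite /blk; apply/norP; split; apply/eqP; lia.
have hm : (N.-1 - p)%N = mir p by [].
rewrite hm.
set m := Ordinal (mirP p).
have hmp : ~~ blk m by rewrite /m /= mblk.
have := hdiag m p hmp; rewrite /= /mir; have := ltn_ord p.
move=> hpN e; have {}e : X m m * X p p = 1 by apply: e; lia.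
have -> : t (mir p) = X m m by rewrite -tP.
have hm0 : X m m != 0 by apply/eqP => e0; move: e; rewrite e0 mul0r => /eqP; rewrite eq_sym oner_eq0.
by rewrite -(mulKf hm0 (X p p)) e mulr1.
Qed.

End Work.

Section Work2.
Variable F : fieldType.
Variable n : nat.
Local Notation N := (2 * n)%N.
Local Notation E := (E F n).
Local Notation mir := (mir n).
Section Bwd.
Variable t : nat -> F.
Variable eta : F.
Hypothesis ht : forall k, (k < n.-1)%N -> t k != 0.
Hypothesis heta : eta = 1 \/ eta = -1.
Hypothesis hn : (3 <= n)%N.

Definition xf (k : nat) : F :=
  if (k < n.-1)%N then t k else if (k <= n)%N then eta else (t (N.-1 - k))^-1.

Lemma eta2 : eta * eta = 1.
Proof. by case: heta => ->; rewrite ?mulr1 ?mulrNN ?mulr1. Qed.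

Lemma xf_neq0 k : xf k != 0.
Proof.
rewrite /xf; case: ifP => h1; first exact: ht.
case: ifP => h2; first by apply/eqP => e; move: eta2; rewrite e mul0r => /eqP; rewrite eq_sym oner_eq0.
rewrite invr_eq0; apply: ht; lia.
Qed.

Lemma xf_mir k : (k < N)%N -> xf (mir k) = (xf k)^-1.
Proof.
move=> hk; rewrite /xf /mir.
case: (ltnP k n.-1) => h1.
  rewrite ifF; last by apply/negbTE; rewrite -leqNgt; lia.
  rewrite ifF; last by apply/negbTE; rewrite -ltnNge; lia.
  by congr (_^-1); congr t; lia.
case: (leqP k n) => h2.
  rewrite ifF; last by apply/negbTE; rewrite -leqNgt; lia.
  rewrite ifT; last by lia.
  by case: heta => ->; rewrite ?invr1 ?invrN ?invr1.
rewrite ifT; last by lia.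
by rewrite invrK.
Qed.

Definition wt (l : F) (A : 'M[F]_N) := forall a b : 'I_N, xf a / xf b * A a b = l * A a b.
Definition Wt (T : tensor F n) := forall p q u v : 'I_N,
  xf p / xf q * (xf u / xf v) * T (p, q, u, v) = T (p, q, u, v).

Lemma Wt_tens l m A B : wt l A -> wt m B -> l * m = 1 -> Wt (tens A B).
Proof.
move=> hA hB hlm p q u v; rewrite ffunE /=.
have -> : xf p / xf q * (xf u / xf v) * (A p q * B u v) =
  (xf p / xf q * A p q) * (xf u / xf v * B u v) by ring.
rewrite hA hB.
have -> : l * A p q * (m * B u v) = (l * m) * (A p q * B u v) by ring.
by rewrite hlm mul1r.
Qed.

Lemma WtD T1 T2 : Wt T1 -> Wt T2 -> Wt (T1 + T2).
Proof. by move=> h1 h2 p q u v; rewrite !ffunE mulrDr h1 h2. Qed.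
Lemma WtN T : Wt T -> Wt (- T).
Proof. by move=> h p q u v; rewrite !ffunE mulrN h. Qed.
Lemma Wt0 : Wt 0.
Proof. by move=> p q u v; rewrite !ffunE mulr0. Qed.
Lemma Wt_sum I (r : seq I) (P : pred I) (G : I -> tensor F n) :
  (forall i, P i -> Wt (G i)) -> Wt (\sum_(i <- r | P i) G i).
Proof. move=> h; apply: big_ind => //; [exact: Wt0 | exact: WtD]. Qed.

Lemma wtE a b : (a < N)%N -> (b < N)%N -> wt (xf a / xf b) (E a b).
Proof.
move=> ha hb p q; rewrite mxE.
case: (eqVneq (p : nat) a) => [<-|hp]; case: (eqVneq (q : nat) b) => [<-|hq] //=;
  by rewrite !mulr0.
Qed.
Lemma wtB l A B : wt l A -> wt l B -> wt l (A - B).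
Proof. by move=> hA hB p q; rewrite !mxE !mulrBr hA hB. Qed.
Lemma wtZ l x A : wt l A -> wt l (x *: A).
Proof. by move=> hA p q; rewrite !mxE mulrCA hA mulrCA. Qed.
Lemma wt_eq l l' A : l = l' -> wt l A -> wt l' A.
Proof. by move=> ->. Qed.
Lemma wt_tr l A : l != 0 -> wt l A -> wt l^-1 A^T.
Proof.
move=> hl hA p q; rewrite !mxE; apply: (mulfI hl).
rewrite [RHS]mulrA mulfV // mul1r mulrCA -hA mulrA.
have hp := xf_neq0 p; have hq := xf_neq0 q.
by rewrite [X in X * _](_ : _ = 1) ?mul1r // mulrA divfK // divff.
Qed.

Lemma wtH i : (i < n)%N -> wt 1 (H F n i).
Proof.
move=> hi; have hiN : (i < N)%N by lia.
have hm : (mir i < N)%N by rewrite /mir; lia.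
apply: wtB; apply: wt_eq (wtE _ _) => //; exact: divff (xf_neq0 _).
Qed.
Lemma wtEm i j : (i < n)%N -> (j < n)%N -> wt (xf i / xf j) (eminus F n i j).
Proof.
move=> hi hj; have hiN : (i < N)%N by lia. have hjN : (j < N)%N by lia.
have hmi : (mir i < N)%N by rewrite /mir; lia.
have hmj : (mir j < N)%N by rewrite /mir; lia.
apply: wtB; first exact: wtE.
apply: wt_eq (wtE _ _) => //; rewrite !xf_mir // invrK mulrC //.
Qed.
Lemma wtEp i j : (i < n)%N -> (j < n)%N -> wt (xf i * xf j) (eplus F n i j).
Proof.
move=> hi hj; have hiN : (i < N)%N by lia. have hjN : (j < N)%N by lia.
have hmi : (mir i < N)%N by rewrite /mir; lia.
have hmj : (mir j < N)%N by rewrite /mir; lia.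
apply: wtB; apply: wt_eq (wtE _ _) => //; rewrite xf_mir // invrK // mulrC //.
Qed.

Lemma Wt_r (c : 'M[F]_n) : Wt (r_BD c).
Proof.
rewrite /r_BD /r0_of /wedge.
apply: WtD; first apply: WtD.
- apply: Wt_sum => i _; apply: Wt_sum => j _.
  by apply: (@Wt_tens 1 1); [apply: wtZ; apply: wtH | apply: wtH | rewrite mulr1].
- apply: Wt_sum => i _; apply: Wt_sum => j _; apply: WtD.
  + apply: Wt_tens (wtEm _ _) (wt_tr _ (wtEm _ _)) _ => //.
      by rewrite mulf_neq0 ?invr_eq0 ?xf_neq0.
    by rewrite mulfV // mulf_neq0 ?invr_eq0 ?xf_neq0.
  + apply: Wt_tens (wtEp _ _) (wt_tr _ (wtEp _ _)) _ => //.
      by rewrite mulf_neq0 ?xf_neq0.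
    by rewrite mulfV // mulf_neq0 ?xf_neq0.
have h2 : (n.-2 < n)%N by lia.
have h1 : (n.-1 < n)%N by lia.
have xe : xf n.-1 = eta by rewrite /xf ltnn ifT //; lia.
have ha := xf_neq0 n.-2; have he := xf_neq0 n.-1.
have hlm : xf n.-2 / xf n.-1 * (xf n.-2 * xf n.-1)^-1 = 1.
  by rewrite invfM mulrACA (mulfV ha) mul1r -invfM xe eta2 invr1.
apply: WtD; last apply: WtN.
  apply: Wt_tens (wtEm h2 h1) (wt_tr _ (wtEp h2 h1)) hlm.
  by rewrite mulf_neq0.
apply: Wt_tens (wt_tr _ (wtEp h2 h1)) (wtEm h2 h1) _; first by rewrite mulf_neq0.
by rewrite mulrC.
Qed.

Lemma neqF (a b : 'I_N) : a != b -> (b == a) = false.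
Proof. by rewrite eq_sym => /negbTE. Qed.

Lemma Tent (p q : 'I_N) : Tdiag n t eta p q = (p == q)%:R * xf p.
Proof. by rewrite /Tdiag !mxE mulr_natl. Qed.

Definition Yinv : 'M[F]_N := \matrix_(p, q) ((p == q)%:R * (xf p)^-1).

Lemma TY : Tdiag n t eta *m Yinv = 1%:M.
Proof.
apply/matrixP => p q; rewrite !mxE (sum_nb _ (p := p)) => [|k hk]; last first.
  by rewrite Tent eq_sym (negbTE hk) !mul0r.
rewrite Tent mxE eqxx mul1r mulrCA mulfV ?xf_neq0 // mulr1.
by case: (p == q).
Qed.

Lemma invT : invmx (Tdiag n t eta) = Yinv.
Proof.
have [hu _] := mulmx1_unit TY.
by rewrite -[RHS]mul1mx -(mulVmx hu) -mulmxA TY mulmx1.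
Qed.

Lemma AdAd_T (T : tensor F n) : Wt T -> AdAd (Tdiag n t eta) T = T.
Proof.
move=> hT; apply/ffunP => [[[[p q] u] v]]; rewrite ffunE /= invT.
rewrite (sum_nb _ (p := p)) => [|a ha]; last first.
  rewrite big1 // => b _; rewrite big1 // => c _; rewrite big1 // => d _.
  by rewrite Tent (neqF ha) !mul0r.
rewrite (sum_nb _ (p := q)) => [|b hb]; last first.
  rewrite big1 // => c _; rewrite big1 // => d _.
  by rewrite !mxE (negbTE hb) !mul0r !mulr0 !mul0r.
rewrite (sum_nb _ (p := u)) => [|c hc]; last first.
  rewrite big1 // => d _.
  by rewrite !Tent (neqF hc) !mul0r !mulr0 !mul0r.
rewrite (sum_nb _ (p := v)) => [|d hd]; last first.
  by rewrite !mxE (negbTE hd) !mul0r !mulr0 !mul0r.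
rewrite !Tent !mxE !eqxx !mul1r -[RHS]hT.
congr (_ * _); ring.
Qed.

Lemma T_O : in_O (Tdiag n t eta).
Proof.
apply/matrixP => p q; rewrite mulE.
rewrite (sum_nb _ (p := q)) => [|j hj]; last by rewrite !Tent (negbTE hj) mul0r mulr0.
rewrite mulE (sum_nb _ (p := p)) => [|i hi]; last by rewrite trEnt !Tent (negbTE hi) mul0r mul0r.
rewrite trEnt !Tent !eqxx !mul1r !Smx_entry.
case: (eqVneq ((p : nat) + q)%N N.-1) => e; last by rewrite mulr0 mul0r.
have hq : (q : nat) = mir p by rewrite /mir; lia.
by rewrite mulr1 hq xf_mir ?mulfV ?xf_neq0.
Qed.

End Bwd.

End Work2.
Theorem mainTheorem11 (F : closedFieldType) (hchar : [pchar F] =i pred0)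
  (n : nat) (hn : (3 <= n)%N) (c : 'M[F]_n) (hc : admissible_r0 c)
  (X : 'M[F]_(2 * n)) :
  in_C (r_BD c) X <->
  exists (t : nat -> F) (eta : F),
    (forall k, (k < n.-1)%N -> t k != 0) /\ (eta = 1 \/ eta = -1) /\
    X = Tdiag n t eta.
Proof.
split.
  by case=> hO hr; exact: (fwd hchar hn hO hr).
case=> t [eta [ht [heta ->]]]; split.
  exact: (T_O ht heta hn).
exact: (AdAd_T ht heta hn (Wt_r ht heta hn c)).
Qed.
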